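(* Let $C_*>1$. There exists a constant $C>0$ depending only on $C_*$ such that the following holds. Let $\mathscr{T}$ be a $C_*$-regular triangular complex in $\mathbb{R}^3$ and $n$ a pseudo-unit edge director on $\mathscr{T}$. If $e=\kappa\cap\kappa'\in\mathscr{E}(\mathscr{T})$ satisfies $(\mathrm{diam}\,\kappa)(|Dn_\kappa|+|Dn_{\kappa'}|)<C$, then \[ |n(e)-\bar n(\kappa)|\le C'\,(\mathrm{diam}\,\kappa)(|Dn_\kappa|+|Dn_{\kappa'}|) \] for a constant $C'$ depending only on $C_*$.
   Context: A triangle is $\kappa=\mathrm{conv}(x,y,z)\subset\mathbb{R}^3$ with $x,y,z$ not collinear, with unit normal $\bar n(\kappa)$ one (chosen) of $\pm\frac{(y-x)\times(z-x)}{|(y-x)\times(z-x)|}$. A triangular complex is a finite family of triangles any two distinct of which meet in the empty set, a common vertex, or a whole common edge; $\mathscr{E}(\mathscr{T})$ is its set of edges; it is $C_*$-regular if $\mathcal{H}^2(\kappa)\ge C_*^{-1}(\mathrm{diam}\,\kappa)^2$ for all $\kappa$. For an edge $e=\kappa\cap\kappa'$, let $n_0(e)=\frac{\bar n(\kappa)+\bar n(\kappa')}{|\bar n(\kappa)+\bar n(\kappa')|}$. A pseudo-unit edge director is a map $n:\mathscr{E}(\mathscr{T})\to\mathbb{R}^3$ with $n(e)\cdot\tau(e)=0$ ($\tau(e)$ a unit vector along $e$) and $n(e)\cdot n_0(e)=1$ for every edge $e$. On each triangle $\kappa$, $n$ is extended to the unique affine map $\kappa\to\mathbb{R}^3$ taking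 the value $n(e)$ at the midpoint of each edge $e$ of $\kappa$, and $Dn_\kappa\in\mathbb{R}^{3\times3}$ is its constant gradient precomposed with the orthogonal projection onto the plane of $\kappa$. *)

(* Defs.v *)
From HB Require Import structures.
From mathcomp Require Import all_boot all_order all_algebra.
From mathcomp Require Import all_classical all_reals.

Set Implicit Arguments.
Unset Strict Implicit.
Unset Printing Implicit Defensive.

Import Order.TTheory GRing.Theory Num.Theory.
Local Open Scope classical_set_scope.
Local Open Scope ring_scope.

Section Geometry.
Variable R : realType.
Notation vec := 'rV[R]_3.

Definition i0 : 'I_3 := @Ordinal 3 0 isT.
Definition i1 : 'I_3 := @Ordinal 3 1 isT.
Definition i2 : 'I_3 := @Ordinal 3 2 isT.

Definition dotv (u v : vec) : R := \sum_(i < 3) u 0 i * v 0 i.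
Definition enorm (v : vec) : R := Num.sqrt (dotv v v).
Definition unitv (v : vec) : vec := (enorm v)^-1 *: v.
Definition cross (u v : vec) : vec :=
  \row_(i < 3)
    (if i == i0 then u 0 i1 * v 0 i2 - u 0 i2 * v 0 i1
     else if i == i1 then u 0 i2 * v 0 i0 - u 0 i0 * v 0 i2
     else u 0 i0 * v 0 i1 - u 0 i1 * v 0 i0).

Definition fnorm (M : 'M[R]_3) : R := Num.sqrt (\sum_(i < 3) \sum_(j < 3) M i j ^+ 2).

Definition seg (a b : vec) : set vec :=
  [set p | exists t : R, 0 <= t <= 1 /\ p = (1 - t) *: a + t *: b].
Definition midp (a b : vec) : vec := 2^-1 *: (a + b).
Definition tau (a b : vec) : vec := unitv (b - a).

(* A triangle: three vertices x,y,z plus the choice of unit normal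
   (true: +(y-x)x(z-x)/|..|, false: its opposite). *)
Definition tri := (vec * vec * vec * bool)%type.
Definition vx (k : tri) : vec := k.1.1.1.
Definition vy (k : tri) : vec := k.1.1.2.
Definition vz (k : tri) : vec := k.1.2.
Definition sgn (k : tri) : bool := k.2.

Definition noncollinear (k : tri) : Prop :=
  cross (vy k - vx k) (vz k - vx k) != 0.

Definition hull (k : tri) : set vec :=
  [set p | exists a b c : R, [/\ 0 <= a, 0 <= b, 0 <= c, a + b + c = 1 &
            p = a *: vx k + b *: vy k + c *: vz k]].

Definition is_vertex (k : tri) (v : vec) : Prop := v = vx k \/ v = vy k \/ v = vz k.
Definition is_edge (k : tri) (e : set vec) : Prop :=
  e = seg (vx k) (vy k) \/ e = seg (vy k) (vz k) \/ e = seg (vz k) (vx k).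

Definition nbar (k : tri) : vec :=
  (if sgn k then 1 else -1) *: unitv (cross (vy k - vx k) (vz k - vx k)).

Definition area (k : tri) : R := 2^-1 * enorm (cross (vy k - vx k) (vz k - vx k)).
Definition diam (k : tri) : R :=
  sup [set d | exists p q, [/\ hull k p, hull k q & d = enorm (p - q)]].

Definition tri_complex (T : seq tri) : Prop :=
  (forall k, k \in T -> noncollinear k) /\
  (forall k k', k \in T -> k' \in T -> hull k = hull k' -> k = k') /\
  (forall k k', k \in T -> k' \in T -> hull k <> hull k' ->
     let I := hull k `&` hull k' in
     I = set0 \/
     (exists v, [/\ is_vertex k v, is_vertex k' v & I = [set v]]) \/
     (exists e, [/\ is_edge k e, is_edge k' e & I = e])).

Definition edges (T : seq tri) : set (set vec) :=
  [set e | exists k, k \in T /\ is_edge k e].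

Definition regular (Cs : R) (T : seq tri) : Prop :=
  forall k, k \in T -> area k >= Cs^-1 * diam k ^+ 2.

Definition n0 (k k' : tri) : vec := unitv (nbar k + nbar k').

Definition pseudo_unit (T : seq tri) (n : set vec -> vec) : Prop :=
  (forall k, k \in T ->
     [/\ dotv (n (seg (vx k) (vy k))) (tau (vx k) (vy k)) = 0,
         dotv (n (seg (vy k) (vz k))) (tau (vy k) (vz k)) = 0 &
         dotv (n (seg (vz k) (vx k))) (tau (vz k) (vx k)) = 0]) /\
  (forall k k', k \in T -> k' \in T -> hull k <> hull k' ->
     edges T (hull k `&` hull k') ->
     dotv (n (hull k `&` hull k')) (n0 k k') = 1).

Definition projP (k : tri) : 'M[R]_3 := 1%:M - (nbar k)^T *m nbar k.

(* M is Dn_kappa: the (constant) gradient A of the affine map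
   p |-> p *m A + b taking the value n(e) at the midpoint of each edge e
   of kappa, precomposed with the orthogonal projection onto the plane of
   kappa.  (Row-vector convention: the differential is v |-> v *m A.) *)
Definition isDn (k : tri) (n : set vec -> vec) (M : 'M[R]_3) : Prop :=
  exists (A : 'M[R]_3) (b : vec),
    [/\ midp (vx k) (vy k) *m A + b = n (seg (vx k) (vy k)),
        midp (vy k) (vz k) *m A + b = n (seg (vy k) (vz k)),
        midp (vz k) (vx k) *m A + b = n (seg (vz k) (vx k)) &
        M = projP k *m A].

End Geometry.

(* Main.v *)
Require Import Defs.
From HB Require Import structures.
From mathcomp Require Import all_boot all_order all_algebra.
From mathcomp Require Import all_classical all_reals.
From mathcomp Require Import ring lra.
Import Order.TTheory GRing.Theory Num.Theory.
Local Open Scope classical_set_scope.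
Local Open Scope ring_scope.

Section V.
Variable R : realType.
Notation vec := 'rV[R]_3.
Implicit Types u v w : vec.

Lemma sum3 (f : 'I_3 -> R) : \sum_(i < 3) f i = f i0 + f i1 + f i2.
Proof. rewrite !big_ord_recr big_ord0 /= GRing.add0r; congr (_ + _ + _); exact: congr1 (val_inj _). Qed.

Lemma vecP u v : u 0 i0 = v 0 i0 -> u 0 i1 = v 0 i1 -> u 0 i2 = v 0 i2 -> u = v.
Proof.
move=> h0 h1 h2; apply/rowP => i.
case: i => [[|[|[|m]]] Hm] //.
- by rewrite (_ : Ordinal Hm = i0) //; apply: val_inj.
- by rewrite (_ : Ordinal Hm = i1) //; apply: val_inj.
- by rewrite (_ : Ordinal Hm = i2) //; apply: val_inj.
Qed.

Lemma dotvE u v : dotv u v = u 0 i0 * v 0 i0 + u 0 i1 * v 0 i1 + u 0 i2 * v 0 i2.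
Proof. by rewrite /dotv sum3. Qed.

Lemma crossE0 u v : cross u v 0 i0 = u 0 i1 * v 0 i2 - u 0 i2 * v 0 i1.
Proof. by rewrite /cross mxE. Qed.
Lemma crossE1 u v : cross u v 0 i1 = u 0 i2 * v 0 i0 - u 0 i0 * v 0 i2.
Proof. by rewrite /cross mxE. Qed.
Lemma crossE2 u v : cross u v 0 i2 = u 0 i0 * v 0 i1 - u 0 i1 * v 0 i0.
Proof. by rewrite /cross mxE. Qed.

Definition cE := (crossE0, crossE1, crossE2, mxE).

Lemma dot_ge0 v : 0 <= dotv v v.
Proof. rewrite dotvE; nra. Qed.

Lemma enorm_ge0 v : 0 <= enorm v.
Proof. exact: sqrtr_ge0. Qed.

Lemma enorm_sq v : enorm v ^+ 2 = dotv v v.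
Proof. by rewrite /enorm sqr_sqrtr // dot_ge0. Qed.

Lemma dotvC u v : dotv u v = dotv v u.
Proof. by rewrite !dotvE; ring. Qed.

Lemma lagrange u v : dotv u u * dotv v v - dotv u v ^+ 2 = dotv (cross u v) (cross u v).
Proof. rewrite !dotvE !cE; ring. Qed.

Lemma CS2 u v : dotv u v ^+ 2 <= dotv u u * dotv v v.
Proof. by rewrite -subr_ge0 lagrange dot_ge0. Qed.

Lemma CS u v : `|dotv u v| <= enorm u * enorm v.
Proof.
rewrite /enorm -sqrtrM ?dot_ge0 // -sqrtr_sqr ler_sqrt ?CS2 //.
by rewrite mulr_ge0 ?dot_ge0.
Qed.

Lemma enorm_le u v : dotv u u <= dotv v v -> enorm u <= enorm v.
Proof. by move=> h; rewrite /enorm ler_sqrt ?dot_ge0. Qed.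

Lemma enorm_leP u (a : R) : 0 <= a -> dotv u u <= a ^+ 2 -> enorm u <= a.
Proof. by move=> a0 h; rewrite -(ger0_norm a0) -sqrtr_sqr /enorm ler_sqrt ?sqr_ge0. Qed.

Lemma le_enormP u (a : R) : 0 <= a -> a ^+ 2 <= dotv u u -> a <= enorm u.
Proof. by move=> a0 h; rewrite -(ger0_norm a0) -sqrtr_sqr /enorm ler_sqrt ?dot_ge0. Qed.

Lemma enormD u v : enorm (u + v) <= enorm u + enorm v.
Proof.
apply: enorm_leP; first by rewrite addr_ge0 ?enorm_ge0.
have h := CS u v; have h1 := enorm_sq u; have h2 := enorm_sq v.
have : dotv (u + v) (u + v) = dotv u u + 2 * dotv u v + dotv v v.
  by rewrite !dotvE !mxE; ring.
move=> ->; rewrite -h1 -h2.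
have := ler_norm (dotv u v); nra.
Qed.

Lemma enormZ (a : R) v : enorm (a *: v) = `|a| * enorm v.
Proof.
rewrite /enorm -sqrtr_sqr -sqrtrM ?sqr_ge0 //; congr Num.sqrt.
rewrite !dotvE !mxE; ring.
Qed.

Lemma enormN v : enorm (- v) = enorm v.
Proof. by rewrite -scaleN1r enormZ normrN normr1 mul1r. Qed.

Lemma enormB u v : enorm (u - v) = enorm (v - u).
Proof. by rewrite -enormN opprB. Qed.

Lemma dot_le u v : `|dotv u v| <= enorm u * enorm v.
Proof. exact: CS. Qed.

Lemma mulmx_bound (x : vec) (M : 'M[R]_3) : enorm (x *m M) <= enorm x * fnorm M.
Proof.
rewrite /fnorm /enorm -sqrtrM ?dot_ge0 // ler_sqrt; last first.
  by rewrite mulr_ge0 ?dot_ge0 // sumr_ge0 // => i _; rewrite sumr_ge0 // => j _; rewrite sqr_ge0.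
have hc : forall j, (x *m M) 0 j = dotv x (\row_i M i j).
  by move=> j; rewrite mxE /dotv; apply: eq_bigr => i _; rewrite mxE.
have hc2 : forall j, ((x *m M) 0 j) ^+ 2 <= dotv x x * dotv (\row_i M i j) (\row_i M i j).
  by move=> j; rewrite hc CS2.
have := hc2 i0; have := hc2 i1; have := hc2 i2.
rewrite !dotvE !sum3 !mxE => h2 h1 h0.
lra.
Qed.

Lemma dotvDr u v w : dotv u (v + w) = dotv u v + dotv u w.
Proof. by rewrite !dotvE !mxE; ring. Qed.
Lemma dotvDl u v w : dotv (v + w) u = dotv v u + dotv w u.
Proof. by rewrite !dotvE !mxE; ring. Qed.
Lemma dotvBr u v w : dotv u (v - w) = dotv u v - dotv u w.
Proof. by rewrite !dotvE !mxE; ring. Qed.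
Lemma dotvBl u v w : dotv (v - w) u = dotv v u - dotv w u.
Proof. by rewrite !dotvE !mxE; ring. Qed.
Lemma dotvZr (a : R) u v : dotv u (a *: v) = a * dotv u v.
Proof. by rewrite !dotvE !mxE; ring. Qed.
Lemma dotvZl (a : R) u v : dotv (a *: v) u = a * dotv v u.
Proof. by rewrite !dotvE !mxE; ring. Qed.

Lemma final_alg (N N' v : vec) (eps eps' : R) :
  dotv N N = 1 -> dotv N' N' = 1 ->
  dotv v (unitv (N + N')) = 1 ->
  enorm (v - dotv v N *: N) <= eps -> enorm (v - dotv v N' *: N') <= eps' ->
  0 <= eps -> 0 <= eps' -> eps + eps' <= 2^-1 ->
  enorm (v - N) <= 4 * (eps + eps').
Proof.
move=> hN hN' hv hw hw' e0 e0' hd.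
set S := N + N'; set s := enorm S.
have s0 : 0 <= s by apply: enorm_ge0.
have hvS : s^-1 * dotv v S = 1 by rewrite -dotvZr.
have sn0 : s != 0 by apply/eqP => s0'; move: hvS; rewrite s0' invr0 mul0r => /esym/eqP; rewrite oner_eq0.
have sp : 0 < s by rewrite lt0r sn0 s0.
have vS : dotv v S = s.
  by move: hvS => /(congr1 (fun x => s * x)); rewrite mulrA divff // mul1r mulr1.
have s2 : s ^+ 2 = 2 + 2 * dotv N N'.
  rewrite /s enorm_sq /S dotvDl !dotvDr hN hN' (dotvC N' N); ring.
have c1 : dotv N N' <= 1.
  have := CS N N'; rewrite /enorm hN sqrtr1 mul1r.
  have -> : dotv N' N' = 1 by [].
  rewrite sqrtr1 => h; exact: le_trans (ler_norm _) h.
have key : forall (P Q : vec) (ep : R), dotv P P = 1 -> dotv Q Q = 1 -> S = P + Q ->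
    enorm (v - dotv v P *: P) <= ep -> `|dotv v P * s / 2 - 1| <= ep.
  move=> P Q ep hP hQ hS hwP.
  set a := dotv v P; set w := v - a *: P.
  have wP : dotv w P = 0 by rewrite /w dotvBl dotvZl hP mulr1 /a subrr.
  have hwS : `|dotv w S| <= ep * s.
    apply: le_trans (CS _ _) _; apply: ler_wpM2r => //.
  have PS : dotv P S = 1 + dotv P Q by rewrite hS dotvDr hP.
  have s2' : s ^+ 2 = 2 + 2 * dotv P Q.
    rewrite /s enorm_sq hS dotvDl !dotvDr hP hQ (dotvC Q P); ring.
  have e1 : dotv v S = a * dotv P S + dotv w S.
    by rewrite /w dotvBl dotvZl; ring.
  rewrite vS PS in e1.
  have e2 : dotv w S = s - a * s ^+ 2 / 2 by rewrite s2'; rewrite e1; field.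
  have : `|s * (a * s / 2 - 1)| <= ep * s.
    by rewrite (_ : s * (a * s / 2 - 1) = - dotv w S) ?normrN // e2; field.
  by rewrite normrM (ger0_norm s0) mulrC ler_pM2r.
have k1 := key N N' eps hN hN' erefl hw.
have k2 := key N' N eps' hN' hN (addrC _ _) hw'.
have ab : dotv v N + dotv v N' = s by rewrite -vS /S dotvDr.
set a := dotv v N in k1 ab *; set b := dotv v N' in k2 ab.
have s4 : s ^+ 2 <= 4 by rewrite s2; lra.
have sl : 4 - 2 * (eps + eps') <= s ^+ 2.
  move: (k1) (k2); rewrite !ler_norml => /andP[h1 _] /andP[h2 _].
  have -> : s ^+ 2 = (a * s / 2) * 2 + (b * s / 2) * 2.
    by rewrite -ab; field.
  lra.
have s1 : 1 <= s by nra.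
have s22 : s <= 2 by nra.
have d2 : 2 - s <= eps + eps' by nra.
have ha : `|a - 1| <= 2 * eps + (eps + eps').
  have e : (a - 1) = (2 * (a * s / 2 - 1) + (2 - s)) / s by field.
  rewrite e normrM normfV (ger0_norm s0) ler_pdivrMr //.
  apply: le_trans (ler_normD _ _) _.
  rewrite normrM (ger0_norm (_ : 0 <= 2 :> R)) // (ger0_norm (_ : 0 <= 2 - s)) ?subr_ge0 //.
  nra.
have -> : v - N = (a - 1) *: N + (v - a *: N).
  by apply/rowP => i; rewrite !mxE; ring.
apply: le_trans (enormD _ _) _.
rewrite enormZ (_ : enorm N = 1); last by rewrite /enorm hN sqrtr1.
lra.
Qed.

Lemma dot_gt0 v : v != 0 -> 0 < dotv v v.
Proof.
move=> hv; rewrite lt_def dot_ge0 andbT; apply: contra hv => /eqP h.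
have h' : v 0 i0 ^+ 2 + v 0 i1 ^+ 2 + v 0 i2 ^+ 2 = 0 by rewrite -h dotvE; ring.
have z0 : v 0 i0 = 0 by apply/eqP; rewrite -sqrf_eq0 eq_le sqr_ge0 andbT; nra.
have z1 : v 0 i1 = 0 by apply/eqP; rewrite -sqrf_eq0 eq_le sqr_ge0 andbT; nra.
have z2 : v 0 i2 = 0 by apply/eqP; rewrite -sqrf_eq0 eq_le sqr_ge0 andbT; nra.
by apply/eqP; apply: vecP; rewrite mxE.
Qed.

Lemma enorm_gt0 v : v != 0 -> 0 < enorm v.
Proof. by move=> h; rewrite /enorm sqrtr_gt0 dot_gt0. Qed.

Lemma mul_proj (x N : vec) : x *m (N^T *m N) = dotv x N *: N.
Proof.
rewrite mulmxA; apply/rowP => j; rewrite !mxE big_ord1 !mxE /dotv.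
by congr (_ * _); apply: eq_bigr => i _; rewrite mxE.
Qed.

Lemma triple v a c : cross v (cross a c) = dotv v c *: a - dotv v a *: c.
Proof. by apply: vecP; rewrite !cE !dotvE; ring. Qed.

Lemma core (Cs : R) (p q r : vec) (sg : bool) (A : 'M[R]_3) (b v u N : vec) (L H : R) :
  N = (if sg then 1 else -1) *: unitv (cross (q - p) (r - p)) ->
  cross (q - p) (r - p) != 0 -> 0 < Cs ->
  midp p q *m A + b = v -> midp r p *m A + b = u ->
  dotv v (q - p) = 0 -> dotv u (p - r) = 0 ->
  enorm (q - p) <= L -> enorm (r - p) <= H -> enorm (q - r) <= H ->
  H ^+ 2 <= Cs * (2^-1 * enorm (cross (q - p) (r - p))) ->
  enorm (v - dotv v N *: N) <= Cs * L * fnorm ((1%:M - N^T *m N) *m A) / 4.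
Proof.
set nn := cross (q - p) (r - p).
move=> hNd nn0 Cs0 hv hu vqp urp hL hH1 hH2 hreg.
set M := (1%:M - N^T *m N) *m A.
set d := 2^-1 *: (q - r).
have fM0 : 0 <= fnorm M by apply: sqrtr_ge0.
have H0 : 0 <= H by apply: le_trans hH1; apply: enorm_ge0.
have L0 : 0 <= L by apply: le_trans hL; apply: enorm_ge0.
have nnp : 0 < enorm nn by apply: enorm_gt0.
have sg2 : (if sg then 1 else -1) ^+ 2 = 1 :> R by case: (sg); rewrite ?expr1n ?sqrrN ?expr1n.
have Ne : N = ((if sg then 1 else -1) / enorm nn) *: nn by rewrite hNd /unitv scalerA.
have NN : dotv N N = 1.
  rewrite Ne dotvZl dotvZr -enorm_sq mulrA -expr2 exprMn sg2 mul1r exprVn mulVf //.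
  by rewrite expf_eq0 /= gt_eqF.
have dnn : dotv d nn = 0 by rewrite /d /nn !dotvE !cE; ring.
have dN : dotv d N = 0 by rewrite Ne dotvZr dnn mulr0.
have vu : v - u = d *m M.
  rewrite /M mulmxA mulmxBr mulmx1 mul_proj dN scale0r subr0 -hv -hu.
  rewrite opprD addrACA subrr addr0 -mulmxBl; congr (_ *m _).
  by apply: vecP; rewrite /midp /d !mxE; ring.
have hvu : enorm (v - u) <= enorm (q - r) / 2 * fnorm M.
  rewrite vu; apply: le_trans (mulmx_bound _ _) _.
  by rewrite /d enormZ ger0_norm ?invr_ge0 // (mulrC (enorm _) 2^-1).
have vrp : dotv v (r - p) = dotv (v - u) (r - p).
  rewrite dotvBl (_ : dotv u (r - p) = 0) ?subr0 //.
  by rewrite -(opprB p r) dotvC -scaleN1r dotvZl dotvC urp mulr0.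
have hvrp : `|dotv v (r - p)| <= H ^+ 2 * fnorm M / 2.
  rewrite vrp; apply: le_trans (CS _ _) _.
  apply: le_trans (ler_pM (enorm_ge0 _) (enorm_ge0 _) hvu hH1) _.
  have := enorm_ge0 (q - r); have := mulr_ge0 fM0 H0; nra.
set w := v - dotv v N *: N.
have ww : dotv w w = dotv v v - dotv v N ^+ 2.
  by rewrite /w !dotvBl !dotvBr !dotvZl !dotvZr NN (dotvC N v); ring.
have vN2 : dotv v N ^+ 2 * dotv nn nn = dotv v nn ^+ 2.
  by rewrite Ne dotvZr exprMn -enorm_sq exprMn sg2 mul1r exprVn mulrAC mulVf ?mul1r // expf_eq0 /= gt_eqF.
have eq2 : dotv w w * dotv nn nn = dotv (q - p) (q - p) * dotv v (r - p) ^+ 2.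
  rewrite ww mulrBl vN2 lagrange /nn triple vqp scale0r subr0 dotvZl dotvZr; ring.
have wle : enorm w * enorm nn <= enorm (q - p) * `|dotv v (r - p)|.
  have a0 := enorm_ge0 w; have a1 := enorm_ge0 nn; have a2 := enorm_ge0 (q - p).
  have a3 := normr_ge0 (dotv v (r - p)).
  have : (enorm w * enorm nn) ^+ 2 = (enorm (q - p) * `|dotv v (r - p)|) ^+ 2.
    by rewrite !exprMn !enorm_sq eq2 real_normK // num_real.
  by move=> h; rewrite -(@ler_pXn2r _ 2) ?nnegrE ?mulr_ge0 // h.
have : enorm w * enorm nn <= L * (H ^+ 2 * fnorm M / 2).
  apply: le_trans wle _; exact: ler_pM (enorm_ge0 _) (normr_ge0 _) hL hvrp.
move=> h2.
have : enorm w * enorm nn <= (Cs * L * fnorm M / 4) * enorm nn.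
  apply: le_trans h2 _.
  have : L * (H ^+ 2 * fnorm M / 2) <= L * (Cs * (2^-1 * enorm nn) * fnorm M / 2).
    apply: ler_wpM2l => //; apply: ler_wpM2r; first by rewrite invr_ge0.
    exact: ler_wpM2r.
  move=> h3; apply: le_trans h3 _; rewrite le_eqVlt; apply/orP; left; apply/eqP; by field.
by move=> h; rewrite -(ler_pM2r nnp).
Qed.

Lemma unit_sg (sg : bool) (nn : vec) : nn != 0 ->
  dotv ((if sg then 1 else -1) *: unitv nn) ((if sg then 1 else -1) *: unitv nn) = 1.
Proof.
move=> nn0; have nnp := @enorm_gt0 nn nn0.
have sg2 : (if sg then 1 else -1) ^+ 2 = 1 :> R by case: (sg); rewrite ?expr1n ?sqrrN ?expr1n.
rewrite /unitv scalerA dotvZl dotvZr -enorm_sq mulrA -expr2 exprMn sg2 mul1r exprVn mulVf //.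
by rewrite expf_eq0 /= gt_eqF.
Qed.

Lemma crossrot1 (x y z : vec) : cross (z - y) (x - y) = cross (y - x) (z - x).
Proof. by apply: vecP; rewrite !cE; ring. Qed.
Lemma crossrot2 (x y z : vec) : cross (x - z) (y - z) = cross (y - x) (z - x).
Proof. by apply: vecP; rewrite !cE; ring. Qed.

Lemma seg_l (a c : vec) : seg a c a.
Proof. by exists 0; split; [rewrite lexx ler01 | rewrite subr0 scale1r scale0r addr0]. Qed.
Lemma seg_r (a c : vec) : seg a c c.
Proof. by exists 1; split; [rewrite ler01 lexx | rewrite subrr scale0r scale1r add0r]. Qed.

Lemma hull_x (k : tri R) : hull k (vx k).
Proof.
exists 1, 0, 0; split; rewrite ?lexx ?ler01 //; first by rewrite !addr0.
by rewrite !scale0r scale1r !addr0.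
Qed.
Lemma hull_y (k : tri R) : hull k (vy k).
Proof.
exists 0, 1, 0; split; rewrite ?lexx ?ler01 //; first by rewrite add0r addr0.
by rewrite !scale0r scale1r add0r addr0.
Qed.
Lemma hull_z (k : tri R) : hull k (vz k).
Proof.
exists 0, 0, 1; split; rewrite ?lexx ?ler01 //; first by rewrite !add0r.
by rewrite !scale0r scale1r !add0r.
Qed.

Lemma hull_bound (k : tri R) p : hull k p ->
  enorm p <= enorm (vx k) + enorm (vy k) + enorm (vz k).
Proof.
case=> a [b [c [a0 b0 c0 s1 ->]]].
apply: le_trans (enormD _ _) _; apply: le_trans (lerD (enormD _ _) (lexx _)) _.
rewrite !enormZ !ger0_norm //.
have := enorm_ge0 (vx k); have := enorm_ge0 (vy k); have := enorm_ge0 (vz k).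
nra.
Qed.

Lemma diam_ub (k : tri R) p q : hull k p -> hull k q -> enorm (p - q) <= diam k.
Proof.
move=> hp hq; apply: ub_le_sup; last by exists p, q.
exists (2 * (enorm (vx k) + enorm (vy k) + enorm (vz k))) => d [p' [q' [hp' hq' ->]]].
apply: le_trans (enormD _ _) _; rewrite enormN.
have := hull_bound _ _ hp'; have := hull_bound _ _ hq'; lra.
Qed.

Lemma diam_ge0 (k : tri R) : 0 <= diam k.
Proof. by apply: le_trans (@diam_ub k _ _ (hull_x k) (hull_x k)); apply: enorm_ge0. Qed.

Lemma noncol_xy (k : tri R) : noncollinear k -> vx k != vy k.
Proof.
rewrite /noncollinear => h; apply: contra h => /eqP ->; rewrite subrr.
by apply/eqP; apply: vecP; rewrite !cE ?mxE; ring.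
Qed.
Lemma noncol_yz (k : tri R) : noncollinear k -> vy k != vz k.
Proof.
rewrite /noncollinear => h; apply: contra h => /eqP ->.
by apply/eqP; apply: vecP; rewrite !cE ?mxE; ring.
Qed.
Lemma noncol_zx (k : tri R) : noncollinear k -> vz k != vx k.
Proof.
rewrite /noncollinear => h; apply: contra h => /eqP ->; rewrite subrr.
by apply/eqP; apply: vecP; rewrite !cE ?mxE; ring.
Qed.

Lemma tau0 (m a c : vec) : a != c -> dotv m (tau a c) = 0 -> dotv m (c - a) = 0.
Proof.
move=> ac; rewrite /tau /unitv dotvZr => /eqP; rewrite mulf_eq0 invr_eq0 => /orP[|/eqP //].
have : c - a != 0 by rewrite subr_eq0 eq_sym.
by move=> /enorm_gt0 /gt_eqF ->.
Qed.

Lemma edge_common (T : seq (tri R)) k k' e : tri_complex T -> k \in T -> k' \in T ->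
  hull k <> hull k' -> edges T e -> e = hull k `&` hull k' -> is_edge k e /\ is_edge k' e.
Proof.
case=> [hnc [_ hI]] hk hk' hne [k'' [hk'' he]] eI.
have [a [c [ac ea]]] : exists a c, a != c /\ e = seg a c.
  have := hnc _ hk''; case: he => [->|[->|->]] h.
  - by exists (vx k''), (vy k''); split => //; exact: noncol_xy.
  - by exists (vy k''), (vz k''); split => //; exact: noncol_yz.
  - by exists (vz k''), (vx k''); split => //; exact: noncol_zx.
have ha : e a by rewrite ea; apply: seg_l.
have hc : e c by rewrite ea; apply: seg_r.
move: (hI k k' hk hk' hne) => /= [I0 | [[w [_ _ Iv]] | [e0 [h1 h2 Ie]]]].
- by move: ha; rewrite eI I0.
- move: ha hc; rewrite eI Iv /= => ha' hc'.
  by move: ac; rewrite ha' hc' eqxx.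
- by rewrite eI Ie.
Qed.

Lemma tri_bound (Cs : R) (T : seq (tri R)) (n : set vec -> vec) k e M L :
  0 < Cs -> tri_complex T -> regular Cs T -> pseudo_unit T n -> k \in T ->
  is_edge k e -> isDn k n M ->
  (forall a c, e a -> e c -> enorm (a - c) <= L) ->
  enorm (n e - dotv (n e) (nbar k) *: nbar k) <= Cs * L * fnorm M / 4.
Proof.
move=> Cs0 [hnc _] hreg [htan _] hk he [A [b [e1 e2 e3 ->]]] hL.
have nc := hnc _ hk; have rg := hreg _ hk.
have [t1 t2 t3] := htan _ hk.
have t1' := tau0 _ _ _ (noncol_xy _ nc) t1.
have t2' := tau0 _ _ _ (noncol_yz _ nc) t2.
have t3' := tau0 _ _ _ (noncol_zx _ nc) t3.
have hr : diam k ^+ 2 <= Cs * area k.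
  by rewrite -ler_pdivrMl // mulrC.
rewrite /projP; case: he => [he|[he|he]]; rewrite he in hL *.
- apply: (@core Cs (vx k) (vy k) (vz k) (sgn k) A b (n (seg (vx k) (vy k))) (n (seg (vz k) (vx k))) _ L (diam k)) => //.
  + exact: hL (seg_r _ _) (seg_l _ _).
  + exact: diam_ub (hull_z k) (hull_x k).
  + exact: diam_ub (hull_y k) (hull_z k).
- apply: (@core Cs (vy k) (vz k) (vx k) (sgn k) A b (n (seg (vy k) (vz k))) (n (seg (vx k) (vy k))) _ L (diam k)) => //.
  + by rewrite crossrot1.
  + by rewrite crossrot1.
  + exact: hL (seg_r _ _) (seg_l _ _).
  + exact: diam_ub (hull_x k) (hull_y k).
  + exact: diam_ub (hull_z k) (hull_x k).
  + by rewrite crossrot1.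
- apply: (@core Cs (vz k) (vx k) (vy k) (sgn k) A b (n (seg (vz k) (vx k))) (n (seg (vy k) (vz k))) _ L (diam k)) => //.
  + by rewrite crossrot2.
  + by rewrite crossrot2.
  + exact: hL (seg_r _ _) (seg_l _ _).
  + exact: diam_ub (hull_y k) (hull_z k).
  + exact: diam_ub (hull_x k) (hull_y k).
  + by rewrite crossrot2.
Qed.

End V.

Theorem lemmaA2 (R : realType) (Cs : R) (hCs : 1 < Cs) :
  exists C C' : R, 0 < C /\ 0 < C' /\
  forall (T : seq (tri R)) (n : set 'rV[R]_3 -> 'rV[R]_3),
    tri_complex T -> regular Cs T -> pseudo_unit T n ->
    forall (k k' : tri R) (e : set 'rV[R]_3) (M M' : 'M[R]_3),
      k \in T -> k' \in T -> hull k <> hull k' ->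
      edges T e -> e = hull k `&` hull k' ->
      isDn k n M -> isDn k' n M' ->
      diam k * (fnorm M + fnorm M') < C ->
      enorm (n e - nbar k) <= C' * (diam k * (fnorm M + fnorm M')).
Proof.
have Cs0 : 0 < Cs by apply: lt_trans hCs; exact: ltr01.
exists (2 / Cs), Cs; split; first by rewrite divr_gt0.
split => //.
move=> T n hT hreg hpu k k' e M M' hk hk' hne heT heI hD hD' hX.
have [ek ek'] := @edge_common R T k k' e hT hk hk' hne heT heI.
have hL : forall a c, e a -> e c -> enorm (a - c) <= diam k.
  by move=> a c; rewrite heI => -[ha _] [hc _]; exact: diam_ub.
have b1 := @tri_bound R Cs T n k e M (diam k) Cs0 hT hreg hpu hk ek hD hL.
have b2 := @tri_bound R Cs T n k' e M' (diam k) Cs0 hT hreg hpu hk' ek' hD' hL.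
have [hnc _] := hT.
have N1 : dotv (nbar k) (nbar k) = 1 by apply: unit_sg; exact: hnc.
have N2 : dotv (nbar k') (nbar k') = 1 by apply: unit_sg; exact: hnc.
have hv : dotv (n e) (unitv (nbar k + nbar k')) = 1.
  have [_ h] := hpu; rewrite heI; apply: h => //; by rewrite -heI.
have fM : 0 <= fnorm M by apply: sqrtr_ge0.
have fM' : 0 <= fnorm M' by apply: sqrtr_ge0.
have d0 := @diam_ge0 R k.
have hX' : Cs * (diam k * (fnorm M + fnorm M')) < 2.
  have -> : 2 = Cs * (2 / Cs) by field; rewrite gt_eqF.
  by rewrite ltr_pM2l.
have := @final_alg R _ _ _ _ _ N1 N2 hv b1 b2.
have e1 : 0 <= Cs * diam k * fnorm M / 4 by rewrite !mulr_ge0 ?invr_ge0 ?(ltW Cs0).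
have e2 : 0 <= Cs * diam k * fnorm M' / 4 by rewrite !mulr_ge0 ?invr_ge0 ?(ltW Cs0).
have e3 : Cs * diam k * fnorm M / 4 + Cs * diam k * fnorm M' / 4 <= 2^-1.
  have -> : Cs * diam k * fnorm M / 4 + Cs * diam k * fnorm M' / 4 =
     (Cs * (diam k * (fnorm M + fnorm M'))) / 4 by field.
  lra.
move=> /(_ e1 e2 e3) h; apply: le_trans h _.
rewrite le_eqVlt; apply/orP; left; apply/eqP; by field.
Qed.
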